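(* Let $R$ be a ring. The following are equivalent: (i) $R$ is nil-clean; (ii) the upper triangular matrix ring ${\rm T}_n(R)$ is weakly nil-clean for all $n\in\mathbb{N}$; (iii) ${\rm T}_n(R)$ is weakly nil-clean for some $n\ge 3$; (iv) ${\rm T}_n(R)$ is GWNC for some $n\ge 3$.
   Context: All rings are associative with identity. For a ring $S$, $U(S)$, ${\rm Nil}(S)$, ${\rm Id}(S)$ denote units, nilpotents, idempotents. $S$ is GWNC if every $a\in S\setminus U(S)$ can be written as $a=q+e$ or $a=q-e$ with $q\in{\rm Nil}(S)$, $e\in{\rm Id}(S)$. $S$ is weakly nil-clean if for every $a\in S$ there is $e\in{\rm Id}(S)$ with $a-e$ or $a+e$ nilpotent; $S$ is nil-clean if every element is a sum of an idempotent and a nilpotent. ${\rm T}_n(R)$ is the ring of $n\times n$ upper triangular matrices over $R$. *)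

(* Defs.v *)
From HB Require Import structures.
From mathcomp Require Import all_boot all_order all_algebra.
Set Implicit Arguments. Unset Strict Implicit. Unset Printing Implicit Defensive.
Import GRing.Theory.
Local Open Scope ring_scope.

(* Ring-theoretic notions relative to a subring of an ambient ring A, given as
   a predicate S (the subring's carrier). *)
Section Notions.
Variable A : pzRingType.

Definition nilp (x : A) : Prop := exists k : nat, x ^+ k = 0.
Definition idemp (x : A) : Prop := x * x = x.

Definition unit_in (S : pred A) (x : A) : Prop :=
  exists y, S y /\ x * y = 1 /\ y * x = 1.

Definition nil_clean_in (S : pred A) : Prop :=
  forall a, S a -> exists e q, [/\ S e, S q, idemp e, nilp q & a = e + q].

Definition weakly_nil_clean_in (S : pred A) : Prop :=
  forall a, S a -> exists e, [/\ S e, idemp e & nilp (a - e) \/ nilp (a + e)].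

Definition GWNC_in (S : pred A) : Prop :=
  forall a, S a -> ~ unit_in S a ->
    exists q e, [/\ S q, S e, nilp q, idemp e & a = q + e \/ a = q - e].
End Notions.

Definition nil_clean (R : pzRingType) : Prop := nil_clean_in (@predT R).

Definition upper_tri (R : pzRingType) (n : nat) : pred 'M[R]_n :=
  fun M => [forall i : 'I_n, forall j : 'I_n, (j < i)%N ==> (M i j == 0)].
Arguments upper_tri R n M : clear implicits.

(* Main.v *)
Require Import Defs.
From mathcomp Require Import all_boot all_order all_algebra.
Set Implicit Arguments. Unset Strict Implicit. Unset Printing Implicit Defensive.
Import GRing.Theory.
Local Open Scope ring_scope.

Section UT.
Variables (R : pzRingType) (n : nat).
Implicit Types A B : 'M[R]_n.

Lemma utP A : reflect (forall i j : 'I_n, (j < i)%N -> A i j = 0) (upper_tri R n A).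
Proof.
apply: (iffP forallP) => [H i j lt| H i]; first by have /forallP/(_ j)/implyP/(_ lt)/eqP := H i.
by apply/forallP => j; apply/implyP => lt; rewrite H.
Qed.

Lemma ut_mul A B : upper_tri R n A -> upper_tri R n B ->
  upper_tri R n (A * B) /\ forall i, (A * B) i i = A i i * B i i.
Proof.
move=> /utP hA /utP hB; split.
  apply/utP => i j lt; rewrite -mulmxE mxE big1 // => k _.
  case: (ltnP k i) => hk; first by rewrite hA ?mul0r.
  by rewrite hB ?mulr0 //; apply: leq_trans lt hk.
move=> i; rewrite -mulmxE mxE (bigD1 i) //= big1 ?addr0 // => k /negPf nk.
case: (ltngtP k i) => hk; first by rewrite hA ?mul0r.
  by rewrite (hB k i) ?mulr0.
by move: nk; rewrite (val_inj hk) eqxx.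
Qed.

Lemma ut_add A B (s : bool) : upper_tri R n A -> upper_tri R n B -> upper_tri R n (A + (-1) ^+ s *: B).
Proof.
move=> /utP hA /utP hB; apply/utP => i j lt; by rewrite !mxE hA // hB // mulr0 addr0.
Qed.

Lemma ut1 : upper_tri R n 1 /\ forall i, (1 : 'M[R]_n) i i = 1.
Proof.
split; last by move=> i; rewrite !mxE eqxx.
apply/utP => i j lt; rewrite !mxE; case: eqP => // e.
by rewrite e ltnn in lt.
Qed.

Lemma ut_exp A m : upper_tri R n A ->
  upper_tri R n (A ^+ m) /\ forall i, (A ^+ m) i i = A i i ^+ m.
Proof.
move=> hA; elim: m => [|m [h1 h2]]; first by rewrite expr0; have [? h] := ut1; split=> // i; rewrite h expr0.
have [h3 h4] := ut_mul h1 hA; split; first by rewrite exprSr.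
by move=> i; rewrite exprSr h4 h2 -exprSr.
Qed.

Lemma ut_strict A m : upper_tri R n A -> (forall i, A i i = 0) ->
  forall i j : 'I_n, (j < i + m)%N -> (A ^+ m) i j = 0.
Proof.
move=> /utP hA hd; elim: m => [|m IH] i j lt.
  by rewrite expr0 !mxE; case: eqP => // e; rewrite e addn0 ltnn in lt.
rewrite exprSr -mulmxE mxE big1 // => k _.
case: (ltnP k (i + m)) => hk; first by rewrite IH ?mul0r.
case: (ltngtP j k) => hjk; first by rewrite hA ?mulr0.
  by exfalso; move: lt; rewrite addnS ltnS => lt; have := leq_trans lt hk; rewrite leqNgt hjk.
by rewrite (val_inj hjk) hd mulr0.
Qed.

Lemma ut_nilp A : upper_tri R n A -> (forall i, Defs.nilp (A i i)) -> Defs.nilp A.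
Proof.
move=> hA hd.
have [k hk] := fin_all_exists hd.
pose K := (\max_i k i)%N.
have hK i : A i i ^+ K = 0.
  by rewrite /K -(subnKC (leq_bigmax i)) exprD hk mul0r.
have [h1 h2] := ut_exp K hA.
exists (K * n)%N; rewrite exprM; apply/matrixP => i j.
rewrite [RHS]mxE ut_strict //; first by move=> l; rewrite h2 hK.
by apply: (leq_trans (ltn_ord j)); rewrite leq_addl.
Qed.

End UT.

Lemma nc_tri (R : pzRingType) (n : nat) : nil_clean R -> weakly_nil_clean_in (upper_tri R n).
Proof.
move=> h A hA.
have h' i : exists e, exists q, [/\ idemp e, Defs.nilp q & A i i = e + q].
  by have [e [q [_ _ ? ? ?]]] := h (A i i) isT; exists e, q.
have [e he] := fin_all_exists h'.
have [q hq] := fin_all_exists he.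
pose E : 'M[R]_n := diag_mx (\row_j e j).
have Ed i j : E i j = e i *+ (i == j) by rewrite !mxE.
have hE : upper_tri R n E.
  by apply/utP => i j lt; rewrite Ed; case: eqP => // ei; rewrite ei ltnn in lt.
exists E; split => //.
  rewrite /idemp -mulmxE mulmx_diag; congr diag_mx; apply/rowP => j; rewrite !mxE.
  by have [-> _ _] := hq j.
left; apply: ut_nilp.
  apply/utP => i j lt; rewrite !mxE (utP _ hA) // /=.
  by case: eqP => [ei|]; [rewrite ei ltnn in lt | rewrite subr0].
move=> i; rewrite !mxE /= eqxx mulr1n.
by have [_ ? ->] := hq i; rewrite addrC addKr.
Qed.

Lemma gwnc_nc (R : pzRingType) (n : nat) : (3 <= n)%N -> GWNC_in (upper_tri R n) -> nil_clean R.
Proof.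
move=> hn h a _.
have l0 : (0 < n)%N by apply: leq_trans hn.
have l1 : (1 < n)%N by apply: leq_trans hn.
pose i0 := Ordinal l0; pose i1 := Ordinal l1; pose i2 := Ordinal hn.
pose d (i : 'I_n) : R := if val i == 0%N then a else if val i == 1%N then -a else 0.
pose A : 'M[R]_n := diag_mx (\row_j d j).
have hA : upper_tri R n A.
  by apply/utP => i j lt; rewrite !mxE; case: eqP => // ei; rewrite ei ltnn in lt.
have Ad i : A i i = d i by rewrite !mxE eqxx mulr1n.
case: (boolP ((1:R) == 0)) => [/eqP z|nz].
  exists 0, 0; split => //; first by rewrite /idemp mul0r.
    by exists 1%N; rewrite expr1.
  by rewrite addr0 -[a]mulr1 z mulr0.
have nu : ~ unit_in (upper_tri R n) A.
  move=> [B [hB [hAB _]]]; have [_ hd] := ut_mul hA hB.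
  have := hd i2; rewrite hAB Ad /d /= mul0r !mxE eqxx mulr1n => e.
  by rewrite e eqxx in nz.
have [Q [E [hQ hE [k hk] hEi hor]]] := h A hA nu.
have [_ hQd] := ut_exp k hQ.
have [_ hEd] := ut_mul hE hE.
have Qn i : Defs.nilp (Q i i) by exists k; rewrite -hQd hk mxE.
have Ei i : idemp (E i i) by rewrite /idemp -hEd hEi.
case: hor => e.
  exists (E i0 i0), (Q i0 i0); split => //.
  have := Ad i0; rewrite e /d /= !mxE => <-; exact: addrC.
exists (E i1 i1), (- Q i1 i1); split => //.
  have [m hm] := Qn i1; exists m; by rewrite exprNn hm mulr0.
have := Ad i1; rewrite e /d /= !mxE => /eqP; rewrite -eqr_opp opprK opprB => /eqP <-.
by rewrite addrC.
Qed.

Theorem proposition2p26 (R : pzRingType) :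
  [<-> nil_clean R;
       forall n : nat, weakly_nil_clean_in (upper_tri R n);
       exists n : nat, (3 <= n)%N /\ weakly_nil_clean_in (upper_tri R n);
       exists n : nat, (3 <= n)%N /\ GWNC_in (upper_tri R n)].
Proof.
tfae.
- by move=> h n; apply: nc_tri.
- by move=> h; exists 3%N.
- move=> [n [hn h]]; exists n; split => // a ha _.
  have [e [he hi [[k hk]|[k hk]]]] := h a ha.
    exists (a - e), e; split => //; first by have := ut_add true ha he; rewrite expr1 scaleN1r.
      by exists k.
    by left; rewrite subrK.
  exists (a + e), e; split => //; first by have := ut_add false ha he; rewrite expr0 scale1r.
    by exists k.
  by right; rewrite addrK.
- by move=> [n [hn h]]; apply: gwnc_nc h.
Qed.
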